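(* Let $\mathbb{T}$ be a time scale, $\alpha\in]0,1]$, $t\in\mathbb{T}_\kappa^\kappa$, $\lambda\in\mathbb{R}$, and let $f,g:\mathbb{T}\to\mathbb{R}$ be symmetric fractional differentiable of order $\alpha$ at $t$. Then: (i) $f+g$ is symmetric fractional differentiable of order $\alpha$ at $t$ with $(f+g)^{\diamondsuit^\alpha}(t)=f^{\diamondsuit^\alpha}(t)+g^{\diamondsuit^\alpha}(t)$; (ii) $\lambda f$ is symmetric fractional differentiable of order $\alpha$ at $t$ with $(\lambda f)^{\diamondsuit^\alpha}(t)=\lambda f^{\diamondsuit^\alpha}(t)$; (iii) if $f$ and $g$ are continuous at $t$, then $fg$ is symmetric fractional differentiable of order $\alpha$ at $t$ with $(fg)^{\diamondsuit^\alpha}(t)=f^{\diamondsuit^\alpha}(t)g^\sigma(t)+f^\rho(t)g^{\diamondsuit^\alpha}(t)$; (iv) if $f$ is continuous at $t$ and $f^\sigma(t)f^\rho(t)\neq0$, then $1/f$ is symmetric fractional differentiable of order $\alpha$ at $t$ with $\left(\frac1f\right)^{\diamondsuit^\alpha}(t)=-\frac{f^{\diamondsuit^\alpha}(t)}{f^\sigma(t)f^\rho(t)}$; (v) if $f$ and $g$ are continuous at $t$ and $g^\sigma(t)g^\rho(t)\neq0$, then $f/g$ is symmetric fractional differentiable of order $\alpha$ at $t$ with $$\left(\frac fg\right)^{\diamondsuit^\alpha}(t)=\frac{f^{\diamondsuit^\alpha}(t)g^\rho(t)-f^\rho(t)g^{\diamondsuit^\alpha}(t)}{g^\sigma(t)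g^\rho(t)}.$$
   Context: A time scale $\mathbb{T}$ is a nonempty closed subset of $\mathbb{R}$ with the induced topology. $\sigma(t)=\inf\{s\in\mathbb{T}:s>t\}$ ($\inf\emptyset=\sup\mathbb{T}$), $\rho(t)=\sup\{s\in\mathbb{T}:s<t\}$ ($\sup\emptyset=\inf\mathbb{T}$); $f^\sigma=f\circ\sigma$, $f^\rho=f\circ\rho$. $\mathbb{T}^\kappa=\mathbb{T}\setminus\{\sup\mathbb{T}\}$ if $\sup\mathbb{T}$ is finite and left-scattered, else $\mathbb{T}$; $\mathbb{T}_\kappa=\mathbb{T}\setminus\{\inf\mathbb{T}\}$ if $\inf\mathbb{T}$ is finite and right-scattered, else $\mathbb{T}$; $\mathbb{T}_\kappa^\kappa=\mathbb{T}_\kappa\cap\mathbb{T}^\kappa$. Symmetric fractional derivative of order $\alpha$ at $t\in\mathbb{T}_\kappa^\kappa$: the real number $f^{\diamondsuit^\alpha}(t)$ (if it exists) such that for every $\varepsilon>0$ there is a neighborhood $U\subset\mathbb{T}$ of $t$ with $\big|[f^\sigma(t)-f(s)+f(2t-s)-f^\rho(t)]-f^{\diamondsuit^\alpha}(t)[\sigma(t)+2t-2s-\rho(t)]^\alpha\big|\le\varepsilon|\sigma(t)+2t-2s-\rho(t)|^\alpha$ for all $s\in U$ with $2t-s\in U$; $f$ is then symmetric fractional differentiable of order $\alpha$ at $t$. *)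

(* Defs.v *)
From HB Require Import structures.
From mathcomp Require Import all_boot all_order all_algebra.
From mathcomp Require Import all_classical all_reals all_analysis.
Set Implicit Arguments. Unset Strict Implicit. Unset Printing Implicit Defensive.
Import Order.TTheory GRing.Theory Num.Theory.
Import numFieldNormedType.Exports.
Local Open Scope classical_set_scope.
Local Open Scope ring_scope.

Section TimeScale.
Variable R : realType.

(* A time scale is a nonempty closed subset T of R (hypotheses in the theorem). *)

Definition fwd_jump (T : set R) (t : R) : R :=
  if pselect ([set s | T s /\ t < s] !=set0)
  then inf [set s | T s /\ t < s] else sup T.

Definition bwd_jump (T : set R) (t : R) : R :=
  if pselect ([set s | T s /\ s < t] !=set0)
  then sup [set s | T s /\ s < t] else inf T.

Definition Tkappa_up (T : set R) : set R :=
  if pselect (has_ubound T /\ bwd_jump T (sup T) < sup T)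
  then T `\ sup T else T.

Definition Tkappa_low (T : set R) : set R :=
  if pselect (has_lbound T /\ inf T < fwd_jump T (inf T))
  then T `\ inf T else T.

Definition Tkk (T : set R) : set R := Tkappa_low T `&` Tkappa_up T.

(* x^alpha for real x, extended to negative x as sign(x) |x|^alpha *)
Definition spow (x a : R) : R := Num.sg x * powR `|x| a.

Definition is_sym_frac_deriv (T : set R) (a : R) (f : R -> R) (t D : R) : Prop :=
  Tkk T t /\
  forall eps : R, 0 < eps ->
    exists U : set R, U `<=` T /\ within T (nbhs t) U /\
      forall s : R, U s -> U (2 * t - s) ->
        `| (f (fwd_jump T t) - f s + f (2 * t - s) - f (bwd_jump T t))
           - D * spow (fwd_jump T t + 2 * t - 2 * s - bwd_jump T t) a |
        <= eps * powR `|fwd_jump T t + 2 * t - 2 * s - bwd_jump T t| a.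

Definition ts_continuous_at (T : set R) (f : R -> R) (t : R) : Prop :=
  f @ within T (nbhs t) --> f t.

End TimeScale.

(* Main.v *)
Require Import Defs.
From HB Require Import structures.
From mathcomp Require Import all_boot all_order all_algebra.
From mathcomp Require Import all_classical all_reals all_analysis.
From mathcomp Require Import ring lra.
Import Order.TTheory GRing.Theory Num.Theory.
Import numFieldNormedType.Exports.
Local Open Scope classical_set_scope.
Local Open Scope ring_scope.

Section Aux.
Variable R : realType.

Definition Fsym (T : set R) (t : R) : set_system R :=
  filter_from (within T (nbhs t)) (fun U => [set s | U s /\ U (2 * t - s)]).

Lemma Fsym_filter T t : Filter (Fsym T t).
Proof.
apply: filter_from_filter; first by exists setT; apply: filterT.
move=> i j Di Dj; exists (i `&` j); first exact: filterI.
by move=> s [[? ?] [? ?]].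
Qed.

Lemma ball_near (t e : R) : 0 < e -> nbhs t [set x | `|x - t| < e].
Proof.
move=> e0; apply/nbhs_ballP; exists e => //= x; rewrite -ball_normE /=.
by rewrite distrC.
Qed.

Lemma fwd_ge (T : set R) t : T t -> t <= fwd_jump T t.
Proof.
move=> Tt; rewrite /fwd_jump; case: (pselect _) => [ne|ne].
  by apply: lb_le_inf => // x [_ /ltW].
have ub : ubound T t.
  move=> x Tx; rewrite leNgt; apply/negP => tx; apply: ne; by exists x.
exact: (ub_le_sup (ex_intro _ t ub) Tt).
Qed.

Lemma bwd_le (T : set R) t : T t -> bwd_jump T t <= t.
Proof.
move=> Tt; rewrite /bwd_jump; case: (pselect _) => [ne|ne].
  by apply: ge_sup => // x [_ /ltW].
have lb : lbound T t.
  move=> x Tx; rewrite leNgt; apply/negP => tx; apply: ne; by exists x.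
exact: (ge_inf (ex_intro _ t lb) Tt).
Qed.

Lemma fwd_le (T : set R) t s : T s -> t < s -> fwd_jump T t <= s.
Proof.
move=> Ts ts; rewrite /fwd_jump; case: (pselect _) => [ne|ne].
  apply: (ge_inf _ (conj Ts ts)); exists t => x [_ /ltW] //.
by exfalso; apply: ne; exists s.
Qed.

Lemma bwd_ge (T : set R) t s : T s -> s < t -> s <= bwd_jump T t.
Proof.
move=> Ts ts; rewrite /bwd_jump; case: (pselect _) => [ne|ne].
  apply: (ub_le_sup _ (conj Ts ts)); exists t => x [_ /ltW] //.
by exfalso; apply: ne; exists s.
Qed.

Lemma scattered (T : set R) t : T t ->
  ~ (fwd_jump T t = t /\ bwd_jump T t = t) -> Fsym T t [set s | s = t].
Proof.
move=> Tt nd.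
have [ft|] := ltP t (fwd_jump T t).
  exists [set x | T x /\ `|x - t| < fwd_jump T t - t].
    rewrite /within /=; near=> x => Tx; split => //.
    near: x; apply: ball_near; by rewrite subr_gt0.
  move=> s [[Ts hs] [T2 h2]] /=.
  have [st|st|//] := ltgtP s t.
    have t2 : t < 2 * t - s by lra.
    have := fwd_le T t (2 * t - s) T2 t2.
    have e : `|2 * t - s - t| = t - s by rewrite gtr0_norm; lra.
    rewrite e in h2; lra.
  have := fwd_le T t s Ts st.
  have e : `|s - t| = s - t by rewrite gtr0_norm; lra.
  rewrite e in hs; lra.
move=> tf.
have ft : fwd_jump T t = t by apply/le_anti; rewrite tf fwd_ge.
have [bt|] := ltP (bwd_jump T t) t; last first.
  move=> tb; exfalso; apply: nd; split => //; apply/le_anti; rewrite tb bwd_le //.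
exists [set x | T x /\ `|x - t| < t - bwd_jump T t].
  rewrite /within /=; near=> x => Tx; split => //.
  near: x; apply: ball_near; by rewrite subr_gt0.
move=> s [[Ts hs] [T2 h2]] /=.
have [st|st|//] := ltgtP s t.
  have := bwd_ge T t s Ts st.
  have e : `|s - t| = t - s by rewrite ltr0_norm; lra.
  rewrite e in hs; lra.
have t2 : 2 * t - s < t by lra.
have := bwd_ge T t (2 * t - s) T2 t2.
have e : `|2 * t - s - t| = s - t by rewrite ltr0_norm; lra.
rewrite e in h2; lra.
Unshelve. all: end_near.
Qed.

Lemma Tkk_T (T : set R) t : Tkk T t -> T t.
Proof.
move=> [hl _]; move: hl; rewrite /Tkappa_low.
by destruct (pselect _) => // [[]].
Qed.

Lemma eq0_small (x c : R) : 0 <= c -> (forall e, 0 < e -> `|x| <= e * c) -> x = 0.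
Proof.
move=> c0 h; apply/eqP; rewrite -normr_eq0 eq_le normr_ge0 andbT.
apply/ler_addgt0Pr => e e0; rewrite add0r.
have c1 : 0 < c + 1 by lra.
set q := e / (c + 1).
have q0 : 0 < q by rewrite /q divr_gt0.
have qe : q * c + q = e by rewrite /q; field; lra.
have := h q q0; nra.
Qed.

Definition oo (F : set_system R) (w X : R -> R) :=
  forall eps, 0 < eps -> F [set s | `|X s| <= eps * w s].

Lemma cvg_bnd (F : set_system R) {FF : Filter F} (B : R -> R) b :
  B @ F --> b -> F [set s | `|B s| <= `|b| + 1].
Proof.
move=> /cvgrPdist_le /(_ 1 ltr01); apply: filterS => s hs /=.
have H1 := ler_normD b (B s - b); rewrite addrC subrK in H1.
rewrite distrC in hs; lra.
Qed.

Lemma combo (F : set_system R) {FF : Filter F} (w sp X E1 E2 B1 B2 Z : R -> R) (b1 b2 : R) :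
  (forall s, `|sp s| <= w s) -> (forall s, 0 <= w s) ->
  oo F w E1 -> oo F w E2 -> B1 @ F --> b1 -> B2 @ F --> b2 -> Z @ F --> (0:R) ->
  F [set s | X s = E1 s * B1 s + E2 s * B2 s + sp s * Z s] -> oo F w X.
Proof.
move=> hsp hw h1 h2 cB1 cB2 cZ hX eps e0.
have C1 : 0 < `|b1| + 1 by rewrite ltr_wpDl.
have C2 : 0 < `|b2| + 1 by rewrite ltr_wpDl.
have p10 : 0 < eps / 3 / (`|b1| + 1) by rewrite !divr_gt0.
have p20 : 0 < eps / 3 / (`|b2| + 1) by rewrite !divr_gt0.
have e3 : 0 < eps / 3 by rewrite divr_gt0.
have q1 : eps / 3 / (`|b1| + 1) * (`|b1| + 1) = eps / 3 by field; lra.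
have q2 : eps / 3 / (`|b2| + 1) * (`|b2| + 1) = eps / 3 by field; lra.
have cZ' := cZ; move/cvgrPdist_le: cZ' => cZ'.
near=> s.
have hx : X s = E1 s * B1 s + E2 s * B2 s + sp s * Z s by near: s.
have a1 : `|E1 s| <= eps / 3 / (`|b1| + 1) * w s by near: s; exact: h1.
have a2 : `|E2 s| <= eps / 3 / (`|b2| + 1) * w s by near: s; exact: h2.
have d1 : `|B1 s| <= `|b1| + 1 by near: s; exact: cvg_bnd.
have d2 : `|B2 s| <= `|b2| + 1 by near: s; exact: cvg_bnd.
have z : `|0 - Z s| <= eps / 3 by near: s; exact: cZ'.
rewrite sub0r normrN in z.
have m1 := ler_pM (normr_ge0 _) (normr_ge0 _) a1 d1.
have m2 := ler_pM (normr_ge0 _) (normr_ge0 _) a2 d2.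
have m3 := ler_pM (normr_ge0 _) (normr_ge0 _) (hsp s) z.
rewrite mulrAC q1 in m1; rewrite mulrAC q2 in m2.
have t1 := ler_normD (E1 s * B1 s + E2 s * B2 s) (sp s * Z s).
have t2 := ler_normD (E1 s * B1 s) (E2 s * B2 s).
rewrite !normrM in t1 t2; rewrite /= hx; lra.
Unshelve. all: end_near.
Qed.


Definition Fx (T : set R) t (f : R -> R) s :=
  f (fwd_jump T t) - f s + f (2 * t - s) - f (bwd_jump T t).
Definition dd (T : set R) t s := fwd_jump T t + 2 * t - 2 * s - bwd_jump T t.
Definition ww (T : set R) t a s := powR `|dd T t s| a.
Definition spp (T : set R) t a s := spow (dd T t s) a.

Lemma ww_ge0 T t a s : 0 <= ww T t a s.
Proof. exact: powR_ge0. Qed.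

Lemma spp_le T t a s : `|spp T t a s| <= ww T t a s.
Proof.
rewrite /spp /spow normrM normr_sg.
case: (_ != 0); rewrite /= ?mul1r ?mul0r ?ww_ge0 // ger0_norm ?powR_ge0 //.
Qed.

Lemma sfd_to T a f t D : is_sym_frac_deriv T a f t D ->
  oo (Fsym T t) (ww T t a) (fun s => Fx T t f s - D * spp T t a s).
Proof.
move=> [_ h] eps e0; have [U [UT [WU hU]]] := h eps e0.
by exists U => // s [Us U2]; apply: hU.
Qed.

Lemma sfd_of T a f t D : Tkk T t ->
  oo (Fsym T t) (ww T t a) (fun s => Fx T t f s - D * spp T t a s) ->
  is_sym_frac_deriv T a f t D.
Proof.
move=> hT h; split => // eps e0; have [U WU hU] := h eps e0.
exists (U `&` T); split; first by move=> x [].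
split; first by apply: filterI => //; exact: withinT.
by move=> s [Us _] [U2 _]; apply: (hU s).
Qed.

Lemma sfd_at T a f t D : is_sym_frac_deriv T a f t D ->
  Fx T t f t = D * spp T t a t.
Proof.
move=> [hT h]; apply/eqP; rewrite -subr_eq0; apply/eqP.
apply: (eq0_small _ _ (ww_ge0 T t a t)) => eps e0.
have [U [UT [WU hU]]] := h eps e0.
have Ut : U t by apply: (nbhs_singleton WU); exact: Tkk_T.
apply: hU => //; by rewrite (_ : 2 * t - t = t) //; ring.
Qed.

Lemma cont_s T t f : ts_continuous_at T f t -> f @ Fsym T t --> f t.
Proof.
move=> hc S /hc WS; exists (f @^-1` S) => //; by move=> s [].
Qed.

Lemma cont_r T t f : ts_continuous_at T f t ->
  (fun s => f (2 * t - s)) @ Fsym T t --> f t.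
Proof.
move=> hc S /hc WS; exists (f @^-1` S) => //; by move=> s [].
Qed.

Lemma ev_neq0 (F : set_system R) {FF : Filter F} (f : R -> R) l :
  f @ F --> l -> l != 0 -> F [set s | f s != 0].
Proof.
move=> /cvgrPdist_lt h l0; have := h `|l|; rewrite normr_gt0 => /(_ l0).
apply: filterS => s /=; apply: contraTneq => ->; by rewrite subr0 ltxx.
Qed.

End Aux.
Arguments Fsym_filter {R}. Arguments scattered {R}. Arguments Tkk_T {R}.
Arguments combo {R}. Arguments sfd_to {R}. Arguments sfd_of {R}. Arguments sfd_at {R}.
Arguments cont_s {R}. Arguments cont_r {R}. Arguments ev_neq0 {R}.
Arguments spp_le {R}. Arguments ww_ge0 {R}.
Arguments Fsym {R}. Arguments oo {R}. Arguments Fx {R}. Arguments dd {R}. Arguments ww {R}. Arguments spp {R}. Arguments eq0_small {R}. Arguments cvg_bnd {R}.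

Theorem theorem3p26 (R : realType) (T : set R) (hTne : T !=set0) (hTcl : closed T)
  (a : R) (ha0 : 0 < a) (ha1 : a <= 1) (t : R) (ht : Tkk T t) (lam : R)
  (f g : R -> R) (Df Dg : R)
  (hf : is_sym_frac_deriv T a f t Df) (hg : is_sym_frac_deriv T a g t Dg) :
  [/\ is_sym_frac_deriv T a (fun x => f x + g x) t (Df + Dg),
      is_sym_frac_deriv T a (fun x => lam * f x) t (lam * Df),
      (ts_continuous_at T f t -> ts_continuous_at T g t ->
        is_sym_frac_deriv T a (fun x => f x * g x) t
          (Df * g (fwd_jump T t) + f (bwd_jump T t) * Dg)),
      (ts_continuous_at T f t -> f (fwd_jump T t) * f (bwd_jump T t) != 0 ->
        is_sym_frac_deriv T a (fun x => (f x)^-1) t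
          (- (Df / (f (fwd_jump T t) * f (bwd_jump T t)))))
    & (ts_continuous_at T f t -> ts_continuous_at T g t ->
        g (fwd_jump T t) * g (bwd_jump T t) != 0 ->
        is_sym_frac_deriv T a (fun x => f x / g x) t
          ((Df * g (bwd_jump T t) - f (bwd_jump T t) * Dg)
             / (g (fwd_jump T t) * g (bwd_jump T t))))].
Proof.
have FF := Fsym_filter T t.
have Tt := Tkk_T T t ht.
have hf' := sfd_to _ _ _ _ _ hf.
have hg' := sfd_to _ _ _ _ _ hg.
have hft := sfd_at _ _ _ _ _ hf.
have hgt := sfd_at _ _ _ _ _ hg.
have e2 : 2 * t - t = t by ring.
have Hsp := spp_le T t a. have Hw := ww_ge0 T t a.
split.
- apply: sfd_of => //.
  apply: (combo _ _ _ _ _ _ _ (fun=> 1) (fun=> 1) (fun=> 0) 1 1 Hsp Hw hf' hg');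
    try exact: cvg_cst.
  by apply: filterE => s /=; rewrite /Fx; ring.
- apply: sfd_of => //.
  apply: (combo _ _ _ _ _ _ _ (fun=> lam) (fun=> 0) (fun=> 0) lam 0 Hsp Hw hf' hf');
    try exact: cvg_cst.
  by apply: filterE => s /=; rewrite /Fx; ring.
- move=> cf cg.
  have [[fs rs]|nd] := pselect (fwd_jump T t = t /\ bwd_jump T t = t); last first.
    apply: sfd_of => // eps e0; apply: filterS (scattered T t Tt nd) => s /= ->.
    set p := spp T t a t in hft hgt *.
    have -> : Fx T t (fun x => f x * g x) t -
      (Df * g (fwd_jump T t) + f (bwd_jump T t) * Dg) * p = 0.
      have -> : (Df * g (fwd_jump T t) + f (bwd_jump T t) * Dg) * p =
        Df * p * g (fwd_jump T t) + f (bwd_jump T t) * (Dg * p) by ring.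
      by rewrite -hft -hgt /Fx e2; ring.
    by rewrite normr0 mulr_ge0 // ltW.
  rewrite fs rs; apply: sfd_of => //.
  apply: (combo _ _ _ _ _ _ _ g (fun s => f (2 * t - s))
     (fun s => Df * (g s - g t) + Dg * (f (2 * t - s) - f t)) (g t) (f t)
     Hsp Hw hf' hg' (cont_s _ _ _ cg) (cont_r _ _ _ cf)).
    have hZ : (fun s => Df * (g s - g t) + Dg * (f (2 * t - s) - f t)) @ Fsym T t
       --> Df * (g t - g t) + Dg * (f t - f t).
      apply: cvgD; apply: cvgM; try exact: cvg_cst; apply: cvgB; try exact: cvg_cst.
        exact: cont_s. exact: cont_r.
    by rewrite !subrr !mulr0 addr0 in hZ.
  by apply: filterE => s /=; rewrite /Fx fs rs; ring.
- move=> cf hne.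
  have [h1 h2] : f (fwd_jump T t) != 0 /\ f (bwd_jump T t) != 0.
    by move: hne; rewrite mulf_eq0 negb_or => /andP.
  have [[fs rs]|nd] := pselect (fwd_jump T t = t /\ bwd_jump T t = t); last first.
    apply: sfd_of => // eps e0; apply: filterS (scattered T t Tt nd) => s /= ->.
    set p := spp T t a t in hft hgt *.
    have -> : Fx T t (fun x => (f x)^-1) t -
      - (Df / (f (fwd_jump T t) * f (bwd_jump T t))) * p = 0.
      have hft' : Df * p = f (fwd_jump T t) - f (bwd_jump T t).
        by rewrite -hft /Fx e2; ring.
      have -> : Fx T t (fun x => (f x)^-1) t = (f (fwd_jump T t))^-1 - (f (bwd_jump T t))^-1.
        by rewrite /Fx e2; ring.
      have -> : - (Df / (f (fwd_jump T t) * f (bwd_jump T t))) * p =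
        - ((Df * p) / (f (fwd_jump T t) * f (bwd_jump T t))) by ring.
      rewrite hft'; field.
      by rewrite h1 h2.
    by rewrite normr0 mulr_ge0 // ltW.
  rewrite fs rs in h1 h2 hne *; apply: sfd_of => //.
  have n1 := ev_neq0 _ FF _ _ (cont_s _ _ _ cf) h1.
  have n2 := ev_neq0 _ FF _ _ (cont_r _ _ _ cf) h1.
  apply: (combo _ _ _ _ _ _ _ (fun s => - (f s * f (2 * t - s))^-1) (fun=> 0)
     (fun s => Df * ((f t * f t)^-1 - (f s * f (2 * t - s))^-1))
     (- (f t * f t)^-1) 0 Hsp Hw hf' hf'); try exact: cvg_cst.
  + apply: cvgN; apply: cvgV => //; apply: cvgM; [exact: cont_s | exact: cont_r].
  + have hZ : (fun s => Df * ((f t * f t)^-1 - (f s * f (2 * t - s))^-1)) @ Fsym T t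
       --> Df * ((f t * f t)^-1 - (f t * f t)^-1).
      apply: cvgM; first exact: cvg_cst.
      apply: cvgB; first exact: cvg_cst.
      apply: cvgV => //; apply: cvgM; [exact: cont_s | exact: cont_r].
    by rewrite !subrr !mulr0 in hZ.
  + apply: filterS (filterI n1 n2) => s /= [a1 a2]; rewrite /Fx fs rs; field.
    by rewrite a1 a2 h1.
- move=> cf cg hne.
  have [h1 h2] : g (fwd_jump T t) != 0 /\ g (bwd_jump T t) != 0.
    by move: hne; rewrite mulf_eq0 negb_or => /andP.
  have [[fs rs]|nd] := pselect (fwd_jump T t = t /\ bwd_jump T t = t); last first.
    apply: sfd_of => // eps e0; apply: filterS (scattered T t Tt nd) => s /= ->.
    set p := spp T t a t in hft hgt *.
    have -> : Fx T t (fun x => f x / g x) t -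
      (Df * g (bwd_jump T t) - f (bwd_jump T t) * Dg) /
        (g (fwd_jump T t) * g (bwd_jump T t)) * p = 0.
      have hft' : Df * p = f (fwd_jump T t) - f (bwd_jump T t).
        by rewrite -hft /Fx e2; ring.
      have hgt' : Dg * p = g (fwd_jump T t) - g (bwd_jump T t).
        by rewrite -hgt /Fx e2; ring.
      have -> : Fx T t (fun x => f x / g x) t =
         f (fwd_jump T t) / g (fwd_jump T t) - f (bwd_jump T t) / g (bwd_jump T t).
        by rewrite /Fx e2; ring.
      have -> : (Df * g (bwd_jump T t) - f (bwd_jump T t) * Dg) /
        (g (fwd_jump T t) * g (bwd_jump T t)) * p =
        ((Df * p) * g (bwd_jump T t) - f (bwd_jump T t) * (Dg * p)) /
        (g (fwd_jump T t) * g (bwd_jump T t)) by ring.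
      rewrite hft' hgt'; field.
      by rewrite h1 h2.
    by rewrite normr0 mulr_ge0 // ltW.
  rewrite fs rs in h1 h2 hne *; apply: sfd_of => //.
  have n1 := ev_neq0 _ FF _ _ (cont_s _ _ _ cg) h1.
  have n2 := ev_neq0 _ FF _ _ (cont_r _ _ _ cg) h1.
  apply: (combo _ _ _ _ _ _ _ (fun s => (g (2 * t - s))^-1)
     (fun s => - (f s / (g s * g (2 * t - s))))
     (fun s => Df / g (2 * t - s) - Dg * (f s / (g s * g (2 * t - s)))
        - (Df * g t - f t * Dg) / (g t * g t))
     (g t)^-1 (- (f t / (g t * g t))) Hsp Hw hf' hg').
  + apply: cvgV => //; exact: cont_r.
  + apply: cvgN; apply: cvgM; first exact: cont_s.
    apply: cvgV; first by rewrite mulf_neq0.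
    apply: cvgM; [exact: cont_s | exact: cont_r].
  + have hZ : (fun s => Df / g (2 * t - s) - Dg * (f s / (g s * g (2 * t - s)))
        - (Df * g t - f t * Dg) / (g t * g t)) @ Fsym T t
       --> Df / g t - Dg * (f t / (g t * g t)) - (Df * g t - f t * Dg) / (g t * g t).
      apply: cvgB; last exact: cvg_cst.
      apply: cvgB; apply: cvgM; try exact: cvg_cst.
        apply: cvgV => //; exact: cont_r.
      apply: cvgM; first exact: cont_s.
      apply: cvgV; first by rewrite mulf_neq0.
      apply: cvgM; [exact: cont_s | exact: cont_r].
    have -> : (0:R) = Df / g t - Dg * (f t / (g t * g t)) -
      (Df * g t - f t * Dg) / (g t * g t) by field.
    exact: hZ.
  + apply: filterS (filterI n1 n2) => s /= [a1 a2]; rewrite /Fx fs rs; field.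
    by rewrite a1 a2 h1.
Qed.
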